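(* Let $S$ be a virtual flat biquandle, $C_n(S)$ the free abelian group on $n$-tuples of elements of $S$ ($C_0(S)=0$), with boundary $\partial_n$ given by $\partial_n=0$ for $n\le 1$ and for $n\ge2$ $$\partial_n(a_1,\dots,a_n)=\sum_{i=1}^n(-1)^i\big((a_1\ast a_i,\dots,a_{i-1}\ast a_i,a_{i+1},\dots,a_n)-(a_1,\dots,a_{i-1},a_{i+1}\circ a_i,\dots,a_n\circ a_i)\big).$$ Let $C_n'(S)\subset C_n(S)$ be the subgroup generated by the elements $(a_1,\dots,a_i,a_{i+1},\dots,a_n)+(a_1,\dots,a_{i+1}\circ a_i,a_i\ast a_{i+1},\dots,a_n)$ for $n\ge2$ (all $a_j\in S$, $1\le i\le n-1$), and $C_n'(S)=0$ for $n\le1$. Then $\partial_n(C_n'(S))\subset C_{n-1}'(S)$ for all $n$, so $\{C_n'(S),\partial_n\}$ is a sub-complex of $\{C_n(S),\partial_n\}$.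
   Context: A virtual flat biquandle is a set $S$ with two binary operations $a\ast b$, $a\circ b$; writing $S_b(a)=a\ast b$, $T_b(a)=a\circ b$, for all $a,b\in S$: (1) $S_aS_b=S_bS_a$, $T_aT_b=T_bT_a$, $S_aT_b=T_bS_a$; (2) $S_a=S_{T_b(a)}=S_{S_b(a)}$, $T_a=T_{S_b(a)}=T_{T_b(a)}$; (3) $T_aS_a=S_aT_a=\mathrm{id}$. The maps $\partial_n$ satisfy $\partial_{n-1}\partial_n=0$. *)

(* Defs.v *)
From HB Require Import structures.
From mathcomp Require Import all_boot all_order all_algebra.
From mathcomp Require Export freeg.
Set Implicit Arguments. Unset Strict Implicit. Unset Printing Implicit Defensive.
Import Order.TTheory GRing.Theory Num.Theory.
Local Open Scope ring_scope.

(* A virtual flat biquandle: ast a b = a * b = S_b(a), circ a b = a o b = T_b(a). *)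
Definition virtual_flat_biquandle (S : Type) (ast circ : S -> S -> S) : Prop :=
  ((forall a b x, ast (ast x b) a = ast (ast x a) b)
      /\ (forall a b x, circ (circ x b) a = circ (circ x a) b)
      /\ (forall a b x, ast (circ x b) a = circ (ast x a) b))
  /\ ((forall a b x, ast x a = ast x (circ a b) /\ ast x a = ast x (ast a b))
      /\ (forall a b x, circ x a = circ x (ast a b) /\ circ x a = circ x (circ a b)))
  /\
      (forall a x, circ (ast x a) a = x /\ ast (circ x a) a = x).

(* Chains: the free abelian group on finite sequences of elements of S;
   C_n(S) is the subgroup supported on sequences of length n. *)
Notation chain S := {freeg (seq S) / int}.

Section Complex.
Variables (S : choiceType) (ast circ : S -> S -> S).

(* for a = (a_1,...,a_n) and 0-based index i (i.e. the paper's i+1):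
   (a_1 * a_{i+1}, ..., a_i * a_{i+1}, a_{i+2}, ..., a_n) *)
Definition face_ast (s : seq S) (i : nat) (x : S) : seq S :=
  map (fun a => ast a x) (take i s) ++ drop i.+1 s.
Definition face_circ (s : seq S) (i : nat) (x : S) : seq S :=
  take i s ++ map (fun a => circ a x) (drop i.+1 s).

Definition bd_basis (s : seq S) : chain S :=
  match s with
  | [::] | [:: _] => 0
  | a :: _ =>
    \sum_(i < size s)
       (-1) ^+ i.+1 *: (<< face_ast s i (nth a s i) >> - << face_circ s i (nth a s i) >>)
  end.

Definition bd (c : chain S) : chain S := fglift bd_basis c.

(* generator of C'_n : for 0-based i with i+1 < n,
   (a_1,...,a_n) + (a_1,...,a_{i+2} o a_{i+1}, a_{i+1} * a_{i+2}, ..., a_n) *)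
Definition swap_at (s : seq S) (i : nat) (x y : S) : seq S :=
  take i s ++ [:: circ y x; ast x y] ++ drop i.+2 s.

Definition degen_gen (s : seq S) (i : nat) (x y : S) : chain S :=
  << s >> + << swap_at s i x y >>.

(* c lies in C'_n(S): c is a Z-linear combination of generators
   (s, i) with size s = n and 1 <= i+1 <= n-1 (which forces n >= 2). *)
Definition in_Cprime (n : nat) (c : chain S) : Prop :=
  exists l : seq (int * (seq S * nat)),
    all (fun g => (size g.2.1 == n) && (g.2.2.+1 < n)%N) l /\
    c = \sum_(g <- l)
          g.1 *: (let s := g.2.1 in let i := g.2.2 in
                  match s with
                  | [::] => 0
                  | a :: _ => degen_gen s i (nth a s i) (nth a s i.+1)
                  end).

End Complex.

(* Main.v *)
Require Import Defs.
From mathcomp Require Import all_boot all_order all_algebra freeg zify.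
Set Implicit Arguments. Unset Strict Implicit. Unset Printing Implicit Defensive.
Import GRing.Theory.
Local Open Scope ring_scope.

Ltac decide_ifs := repeat match goal with
 | |- context [if ?c then _ else _] =>
   first [ have -> : c = true by lia | have -> : c = false by lia ] end.

Lemma size_fa (S : choiceType) (ast : S -> S -> S) s j x :
  (j < size s)%N -> size (face_ast ast s j x) = (size s).-1.
Proof. move=> hj; rewrite /face_ast size_cat size_map size_take hj size_drop; lia. Qed.

Lemma size_fc (S : choiceType) (circ : S -> S -> S) s j x :
  (j < size s)%N -> size (face_circ circ s j x) = (size s).-1.
Proof. move=> hj; rewrite /face_circ size_cat size_map size_take hj size_drop; lia. Qed.

Lemma size_sw (S : choiceType) (ast circ : S -> S -> S) s k x y :
  (k.+1 < size s)%N -> size (swap_at ast circ s k x y) = size s.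
Proof. move=> hk; rewrite /swap_at !size_cat size_take size_drop /=.
have -> : (k < size s)%N = true by lia. lia. Qed.

Lemma nth_fa (S : choiceType) (ast : S -> S -> S) d s j x i :
  (j < size s)%N -> nth d (face_ast ast s j x) i =
  if (i < j)%N then ast (nth d s i) x else nth d s i.+1.
Proof.
move=> hj; rewrite /face_ast nth_cat size_map size_take hj.
case: ifP => hij; first by rewrite (nth_map d) ?size_take ?hj // nth_take.
rewrite nth_drop; congr nth; lia.
Qed.

Lemma nth_fc (S : choiceType) (circ : S -> S -> S) d s j x i :
  (j < size s)%N -> (i < (size s).-1)%N -> nth d (face_circ circ s j x) i =
  if (i < j)%N then nth d s i else circ (nth d s i.+1) x.
Proof.
move=> hj hi; rewrite /face_circ nth_cat size_take hj.
case: ifP => hij; first by rewrite nth_take.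
rewrite (nth_map d) ?nth_drop; last by rewrite size_drop; lia.
congr circ; congr nth; lia.
Qed.

Lemma nth_sw (S : choiceType) (ast circ : S -> S -> S) d s k x y i :
  (k.+1 < size s)%N -> nth d (swap_at ast circ s k x y) i =
  if (i < k)%N then nth d s i else if i == k then circ y x
  else if i == k.+1 then ast x y else nth d s i.
Proof.
move=> hk; rewrite /swap_at nth_cat size_take.
have -> : (k < size s)%N = true by lia.
case: ifP => hik; first by rewrite nth_take.
rewrite nth_cat /=.
case E: (i - k)%N => [|[|m]] /=.
- by decide_ifs.
- by decide_ifs.
- rewrite nth_drop; decide_ifs; congr nth; lia.
Qed.

Definition swapspec (S : choiceType) (ast circ : S -> S -> S) d (s s' : seq S) k :=
  forall i, nth d s' i = if (i < k)%N then nth d s i else if i == k then circ (nth d s k.+1) (nth d s k)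
    else if i == k.+1 then ast (nth d s k) (nth d s k.+1) else nth d s i.

Lemma E1 (S : choiceType) (ast circ : S -> S -> S) d s s' k j :
  virtual_flat_biquandle ast circ ->
  (k.+1 < size s)%N -> size s' = size s -> swapspec ast circ d s s' k -> (j < k)%N ->
  face_ast ast s' j (nth d s' j) =
  swap_at ast circ (face_ast ast s j (nth d s j)) k.-1
     (nth d (face_ast ast s j (nth d s j)) k.-1) (nth d (face_ast ast s j (nth d s j)) k.-1.+1).
Proof.
move=> [[A1 [A2 A3]] [[A4 A5] A6]] hk hs' Ha' hj.
case: k hk Ha' hj => [|K] hk Ha' hj; first lia.
apply: (eq_from_nth (x0:=d)).
  rewrite size_sw ?size_fa ?hs' //; lia.
move=> i; rewrite size_fa ?hs' => [hi|]; last lia.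
rewrite nth_sw ?size_fa /=; try lia.
rewrite !nth_fa ?hs' //; try lia.
rewrite !Ha'.
have: (i < j \/ (j <= i < K) \/ i = K \/ i = K.+1 \/ K.+1 < i)%N by lia.
case => [h|[h|[->|[->|h]]]]; decide_ifs => //.
Qed.

Lemma E2 (S : choiceType) (ast circ : S -> S -> S) d s s' k j :
  virtual_flat_biquandle ast circ ->
  (j < size s)%N -> size s' = size s -> swapspec ast circ d s s' k -> (k.+1 < j)%N ->
  face_ast ast s' j (nth d s' j) =
  swap_at ast circ (face_ast ast s j (nth d s j)) k
     (nth d (face_ast ast s j (nth d s j)) k) (nth d (face_ast ast s j (nth d s j)) k.+1).
Proof.
move=> [[A1 [A2 A3]] [[A4 A5] A6]] hjs hs' Ha' hj.
apply: (eq_from_nth (x0:=d)).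
  rewrite size_sw ?size_fa ?hs' //; lia.
move=> i; rewrite size_fa ?hs' => [hi|]; last lia.
rewrite nth_sw ?size_fa /=; try lia.
rewrite !nth_fa ?hs' //; try lia.
rewrite !Ha'.
have: (i < k \/ i = k \/ i = k.+1 \/ (k.+1 < i < j) \/ j <= i)%N by lia.
case => [h|[->|[->|[h|h]]]]; decide_ifs => //.

- rewrite -(proj1 (A5 _ _ _)); exact: A3.
- rewrite -(proj2 (A4 _ _ _)); exact: A1.
Qed.

Lemma E3 (S : choiceType) (ast circ : S -> S -> S) d s s' k j :
  virtual_flat_biquandle ast circ ->
  (k.+1 < size s)%N -> size s' = size s -> swapspec ast circ d s s' k -> (j < k)%N ->
  face_circ circ s' j (nth d s' j) =
  swap_at ast circ (face_circ circ s j (nth d s j)) k.-1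
     (nth d (face_circ circ s j (nth d s j)) k.-1) (nth d (face_circ circ s j (nth d s j)) k.-1.+1).
Proof.
move=> [[A1 [A2 A3]] [[A4 A5] A6]] hk hs' Ha' hj.
case: k hk Ha' hj => [|K] hk Ha' hj; first lia.
apply: (eq_from_nth (x0:=d)).
  rewrite size_sw ?size_fc ?hs' //; lia.
move=> i; rewrite size_fc ?hs' => [hi|]; last lia.
rewrite nth_sw ?size_fc /=; try lia.
rewrite !nth_fc ?hs' //; try lia.
rewrite !Ha'.
have: (i < j \/ (j <= i < K) \/ i = K \/ i = K.+1 \/ K.+1 < i)%N by lia.
case => [h|[h|[->|[->|h]]]]; decide_ifs => //.

- rewrite -(proj2 (A5 _ _ _)); exact: A2.
- by rewrite -(proj1 (A4 _ _ _)) A3.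
Qed.

Lemma E4 (S : choiceType) (ast circ : S -> S -> S) d s s' k j :
  virtual_flat_biquandle ast circ ->
  (j < size s)%N -> size s' = size s -> swapspec ast circ d s s' k -> (k.+1 < j)%N ->
  face_circ circ s' j (nth d s' j) =
  swap_at ast circ (face_circ circ s j (nth d s j)) k
     (nth d (face_circ circ s j (nth d s j)) k) (nth d (face_circ circ s j (nth d s j)) k.+1).
Proof.
move=> [[A1 [A2 A3]] [[A4 A5] A6]] hjs hs' Ha' hj.
apply: (eq_from_nth (x0:=d)).
  rewrite size_sw ?size_fc ?hs' //; lia.
move=> i; rewrite size_fc ?hs' => [hi|]; last lia.
rewrite nth_sw ?size_fc /=; try lia.
rewrite !nth_fc ?hs' //; try lia.
rewrite !Ha'.
have: (i < k \/ i = k \/ i = k.+1 \/ (k.+1 < i < j) \/ j <= i)%N by lia.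
case => [h|[->|[->|[h|h]]]]; decide_ifs => //.
Qed.

Lemma E5 (S : choiceType) (ast circ : S -> S -> S) d s s' k :
  virtual_flat_biquandle ast circ ->
  (k.+1 < size s)%N -> size s' = size s -> swapspec ast circ d s s' k ->
  face_ast ast s k (nth d s k) = face_ast ast s' k.+1 (nth d s' k.+1).
Proof.
move=> [[A1 [A2 A3]] [[A4 A5] A6]] hk hs' Ha'.
apply: (eq_from_nth (x0:=d)); first by rewrite !size_fa ?hs' //; lia.
move=> i; rewrite size_fa => [hi|]; last lia.
rewrite !nth_fa ?hs' //; try lia.
rewrite !Ha'.
have: (i < k \/ i = k \/ k < i)%N by lia.
case => [h|[->|h]]; decide_ifs => //.
- by rewrite -(proj2 (A4 _ _ _)).
- by rewrite -(proj2 (A4 _ _ _)) (proj2 (A6 _ _)).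
Qed.

Lemma E6 (S : choiceType) (ast circ : S -> S -> S) d s s' k :
  virtual_flat_biquandle ast circ ->
  (k.+1 < size s)%N -> size s' = size s -> swapspec ast circ d s s' k ->
  face_circ circ s k (nth d s k) = face_circ circ s' k.+1 (nth d s' k.+1).
Proof.
move=> [[A1 [A2 A3]] [[A4 A5] A6]] hk hs' Ha'.
apply: (eq_from_nth (x0:=d)); first by rewrite !size_fc ?hs' //; lia.
move=> i; rewrite size_fc => [hi|]; last lia.
rewrite !nth_fc ?hs' //; try lia.
rewrite !Ha'.
have: (i < k \/ i = k \/ k < i)%N by lia.
case => [h|[->|h]]; decide_ifs => //.
by rewrite -(proj1 (A5 _ _ _)).
Qed.

Lemma E7 (S : choiceType) (ast circ : S -> S -> S) d s s' k :
  virtual_flat_biquandle ast circ ->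
  (k.+1 < size s)%N -> size s' = size s -> swapspec ast circ d s s' k ->
  face_ast ast s k.+1 (nth d s k.+1) = face_ast ast s' k (nth d s' k).
Proof.
move=> [[A1 [A2 A3]] [[A4 A5] A6]] hk hs' Ha'.
apply: (eq_from_nth (x0:=d)); first by rewrite !size_fa ?hs' //; lia.
move=> i; rewrite size_fa => [hi|]; last lia.
rewrite !nth_fa ?hs' //; try lia.
rewrite !Ha'.
have: (i < k \/ i = k \/ k < i)%N by lia.
case => [h|[->|h]]; decide_ifs => //.
by rewrite -(proj1 (A4 _ _ _)).
Qed.

Lemma E8 (S : choiceType) (ast circ : S -> S -> S) d s s' k :
  virtual_flat_biquandle ast circ ->
  (k.+1 < size s)%N -> size s' = size s -> swapspec ast circ d s s' k ->
  face_circ circ s k.+1 (nth d s k.+1) = face_circ circ s' k (nth d s' k).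
Proof.
move=> [[A1 [A2 A3]] [[A4 A5] A6]] hk hs' Ha'.
apply: (eq_from_nth (x0:=d)); first by rewrite !size_fc ?hs' //; lia.
move=> i; rewrite size_fc => [hi|]; last lia.
rewrite !nth_fc ?hs' //; try lia.
rewrite !Ha'.
have: (i < k \/ i = k \/ k < i)%N by lia.
case => [h|[->|h]]; decide_ifs => //.
- by rewrite -(proj2 (A5 _ _ _)) (proj1 (A6 _ _)).
- by rewrite -(proj2 (A5 _ _ _)).
Qed.

Lemma bdB (S : choiceType) (ast circ : S -> S -> S) x y :
  bd ast circ (x - y) = bd ast circ x - bd ast circ y.
Proof. exact: lift_is_additive. Qed.
Lemma bd0 (S : choiceType) (ast circ : S -> S -> S) : bd ast circ 0 = 0.
Proof. by have := bdB ast circ 0 0; rewrite !subrr. Qed.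
Lemma bdN (S : choiceType) (ast circ : S -> S -> S) x : bd ast circ (- x) = - bd ast circ x.
Proof. by have := bdB ast circ 0 x; rewrite !sub0r bd0 sub0r. Qed.
Lemma bdD (S : choiceType) (ast circ : S -> S -> S) x y :
  bd ast circ (x + y) = bd ast circ x + bd ast circ y.
Proof. by rewrite -[y]opprK bdB !bdN opprK. Qed.
Lemma bdZ (S : choiceType) (ast circ : S -> S -> S) (z : int) x :
  bd ast circ (z *: x) = z *: bd ast circ x.
Proof.
rewrite -[z]intz !scaler_int.
have hn m : bd ast circ (x *+ m) = bd ast circ x *+ m.
  elim: m => [|m IH]; first by rewrite !mulr0n bd0.
  by rewrite !mulrS bdD IH.
by case: z => m; rewrite ?NegzE /= ?mulrNz -?pmulrn ?bdN hn.
Qed.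
Lemma bdU (S : choiceType) (ast circ : S -> S -> S) t :
  bd ast circ << t >> = bd_basis ast circ t.
Proof. by rewrite /bd liftU scale1r. Qed.

Lemma Cp0 (S : choiceType) (ast circ : S -> S -> S) N : in_Cprime ast circ N 0.
Proof. by exists [::]; rewrite big_nil. Qed.
Lemma CpD (S : choiceType) (ast circ : S -> S -> S) N x y :
  in_Cprime ast circ N x -> in_Cprime ast circ N y -> in_Cprime ast circ N (x + y).
Proof.
move=> [l1 [h1 ->]] [l2 [h2 ->]]; exists (l1 ++ l2).
by rewrite all_cat h1 h2 big_cat.
Qed.
Lemma CpZ (S : choiceType) (ast circ : S -> S -> S) N (z : int) x :
  in_Cprime ast circ N x -> in_Cprime ast circ N (z *: x).
Proof.
move=> [l [h ->]]; exists [seq (z * g.1, g.2) | g <- l]; split.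
  by rewrite all_map.
rewrite big_map scaler_sumr; apply: eq_bigr => g _; by rewrite scalerA.
Qed.
Lemma CpB (S : choiceType) (ast circ : S -> S -> S) N x y :
  in_Cprime ast circ N x -> in_Cprime ast circ N y -> in_Cprime ast circ N (x - y).
Proof. move=> hx hy; apply: CpD => //; rewrite -scaleN1r; exact: CpZ. Qed.

Lemma Cgen (S : choiceType) (ast circ : S -> S -> S) d N t m :
  size t = N -> (m.+1 < N)%N ->
  in_Cprime ast circ N (<< t >> + << swap_at ast circ t m (nth d t m) (nth d t m.+1) >>).
Proof.
move=> ht hm; exists [:: (1, (t, m))]; split.
  by rewrite /= ht eqxx hm.
rewrite big_cons big_nil addr0 scale1r /=.
case: t ht => [|a t] ht; first by rewrite -ht in hm.
rewrite /degen_gen !(set_nth_default a d) //.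
all: rewrite ht; lia.
Qed.

Lemma bd_basisE (S : choiceType) (ast circ : S -> S -> S) d s n :
  size s = n -> (1 < n)%N ->
  bd_basis ast circ s = \sum_(i < n) (-1) ^+ i.+1 *:
     (<< face_ast ast s i (nth d s i) >> - << face_circ circ s i (nth d s i) >>).
Proof.
move=> <-; case: s => [|a [|b t]] // _.
apply: eq_bigr => i _; by rewrite (set_nth_default d a).
Qed.

Lemma key (S : choiceType) (ast circ : S -> S -> S) d s k :
  virtual_flat_biquandle ast circ -> (k.+1 < size s)%N ->
  in_Cprime ast circ (size s).-1
    (bd_basis ast circ s + bd_basis ast circ (swap_at ast circ s k (nth d s k) (nth d s k.+1))).
Proof.
move=> H hk.
set s' := swap_at _ _ _ _ _ _.
have hs' : size s' = size s by rewrite size_sw.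
have Ha' : swapspec ast circ d s s' k by move=> i; rewrite nth_sw.
move: s' hs' Ha' => s' hs' Ha'.
set n := size s.
rewrite (bd_basisE ast circ d (erefl n)); last lia.
rewrite (bd_basisE ast circ d (s := s') hs'); last lia.
rewrite -big_split /=.
have hk0 : (k < n)%N by lia.
have hk1 : (k.+1 < n)%N by lia.
rewrite (bigD1 (Ordinal hk0)) //= (bigD1 (Ordinal hk1)) //=.
rewrite addrA.
rewrite (E5 H hk hs' Ha') (E6 H hk hs' Ha') (E7 H hk hs' Ha') (E8 H hk hs' Ha').
rewrite !exprS !mulN1r !scaleNr opprK.
rewrite (_ : - _ - _ + (_ + _) = 0) ?add0r; last first.
  by rewrite opprK addrC addrA addrK subrr.
2: by rewrite -val_eqE /=; lia.
apply: big_ind; [exact: Cp0 | exact: CpD | move=> i /andP [hi1 hi2]].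
have hi1' : (i : nat) != k by [].
have hi2' : (i : nat) != k.+1 by [].
rewrite -scalerDr; apply: CpZ.
rewrite addrACA -opprD.
have hin : (i < size s)%N by exact: ltn_ord.
case: (ltngtP i k) => h.
- rewrite (E1 H hk hs' Ha' h) (E3 H hk hs' Ha' h).
  apply: CpB; apply: Cgen; rewrite ?size_fa ?size_fc //; lia.
- have h' : (k.+1 < i)%N by lia.
  rewrite (E2 H hin hs' Ha' h') (E4 H hin hs' Ha' h').
  apply: CpB; apply: Cgen; rewrite ?size_fa ?size_fc //; lia.
- by rewrite h eqxx in hi1'.
Qed.

Theorem lemma5p2 (S : choiceType) (ast circ : S -> S -> S) :
  virtual_flat_biquandle ast circ ->
  forall (n : nat) (c : {freeg (seq S) / int}),
    in_Cprime ast circ n c -> in_Cprime ast circ n.-1 (bd ast circ c).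
Proof.
move=> H n c [l [Hall ->]].
elim: l Hall => [|[z [s i]] l IH] /=.
  by rewrite big_nil bd0 => _; exact: Cp0.
move=> /andP [/andP [/eqP hs hi] hl].
rewrite big_cons bdD bdZ; apply: CpD; last exact: IH.
apply: CpZ; case: s hs hi => [|a t] hs hi /=.
  by rewrite -hs in hi.
rewrite /degen_gen bdD !bdU -hs; apply: key => //; lia.
Qed.
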